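(* Fix $k$ and $\alpha>0$, and let $\beta\in(0,1)$. If $k>8/(1-\beta)$ and $n$ is sufficiently large, then with high probability over the random $k$-CNF formula $\Phi=\Phi(k,n,\lfloor\alpha n\rfloor)$ with clause set $\mathcal C_\Phi$, every subset $\mathcal C'\subseteq\mathcal C_\Phi$ with $2\le|\mathcal C'|\le2\log n$ contains at least two different clauses $c_1,c_2\in\mathcal C'$ such that for each $i\in\{1,2\}$, $$\Big|\mathrm{vbl}(c_i)\setminus\bigcup_{c'\in\mathcal C'\setminus\{c_i\}}\mathrm{vbl}(c')\Big|\ge\beta k.$$
   Context: The random $k$-CNF formula $\Phi(k,n,m)$ has variables $V=\{v_1,\dots,v_n\}$ and $m$ clauses generated independently, each a disjunction of $k$ literals, each literal chosen uniformly at random with replacement from the $2n$ literals $\{v_1,\dots,v_n,\neg v_1,\dots,\neg v_n\}$. $\mathrm{vbl}(c)$ is the set of (distinct) variables appearing in clause $c$. $\log$ denotes $\log_2$. *)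

(* Defs.v *)
From mathcomp Require Import all_boot.
From Stdlib Require Import Reals.

Set Implicit Arguments.
Unset Strict Implicit.
Unset Printing Implicit Defensive.

(* A literal over variables v_0..v_{n-1}: (variable, sign); true = positive.
   There are exactly 2n literals. *)
Definition literal (n : nat) := ('I_n * bool)%type.

(* A clause is an ordered k-tuple of literals (literals chosen with replacement). *)
Definition clause (k n : nat) := {ffun 'I_k -> literal n}.

Definition formula (k n m : nat) := {ffun 'I_m -> clause k n}.

Definition vbl (k n : nat) (c : clause k n) : {set 'I_n} :=
  [set (c j).1 | j : 'I_k].

Definition Rleb (x y : R) : bool := if Rle_dec x y then true else false.

Definition log2 (x : R) : R := (ln x / ln 2)%R.

Definition num_clauses (alpha : R) (n : nat) : nat :=
  Z.to_nat (Int_part (alpha * INR n)).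

(* The random formula
   Phi(k,n,m) (m independent clauses, each with k independent uniform
   literals) is exactly the uniform distribution on [formula k n m]. *)
Definition prob (T : finType) (P : pred T) : R :=
  (INR #|[set x | P x]| / INR #|T|)%R.

Definition unique_vars_property (k n m : nat) (beta : R) (F : formula k n m) : bool :=
  [forall S : {set 'I_m},
    ((2 <= #|S|)%N && Rleb (INR #|S|) (2 * log2 (INR n))%R) ==>
    [exists c1 : 'I_m, exists c2 : 'I_m,
      [&& c1 != c2, c1 \in S, c2 \in S,
          Rleb (beta * INR k)%R
               (INR #|vbl (F c1) :\: \bigcup_(c' in S :\ c1) vbl (F c')|)
        & Rleb (beta * INR k)%R
               (INR #|vbl (F c2) :\: \bigcup_(c' in S :\ c2) vbl (F c')|)]]].

(* Main.v *)
Require Import Defs.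
From Stdlib Require Import Reals Lra ZArith.
From mathcomp Require Import all_boot.
From mathcomp Require Import zify.
Delimit Scope R_scope with R.

Set Implicit Arguments.
Unset Strict Implicit.
Unset Printing Implicit Defensive.

Lemma card_exists_le (T U : finType) (P : T -> U -> bool) :
  #|[set x | [exists y, P x y]]| <= \sum_(y : U) #|[set x | P x y]|.
Proof.
have E : forall y, #|[set x | P x y]| = \sum_(x : T) (P x y : nat).
  move=> y; rewrite -sum1_card big_mkcond; apply: eq_bigr => x _.
  by rewrite inE; case: (P x y).
under eq_bigr do rewrite E.
rewrite exchange_big -sum1_card big_mkcond /=; apply: leq_sum => x _.
rewrite inE; case: existsP => [[y Py]|_] //.
by rewrite (bigD1 y) //= Py.
Qed.

Definition rk (T : finType) (x : T) : nat := enum_rank x.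

Lemma first_occ (T U : finType) (f : T -> U) :
  #|T| <= #|[set i | [exists p, (rk p < rk i) && (f p == f i)]]| + #|f @: [set: T]|.
Proof.
set R := [set i | _].
rewrite -(cardsC R) leq_add2l.
have inj : {in ~: R &, injective f}.
  move=> x y; rewrite !inE => /existsPn Hx /existsPn Hy Efxy.
  case: (ltngtP (rk x) (rk y)) => H.
  - by move: (Hy x); rewrite H Efxy eqxx.
  - by move: (Hx y); rewrite H Efxy eqxx.
  - by apply: enum_rank_inj; apply: val_inj.
rewrite -(card_in_imset inj); apply: subset_leq_card.
by apply: imsetS; apply: subsetT.
Qed.

Lemma extract (T U : finType) (f : T -> U) (t : nat) :
  t <= #|[set i | [exists p, (rk p < rk i) && (f p == f i)]]| ->
  exists h : {ffun 'I_t -> T * T},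
    injective (fun l => (h l).2) /\
    forall l, (rk (h l).1 < rk (h l).2) /\ f (h l).1 = f (h l).2.
Proof.
set R := [set i | _] => Ht.
have Hi : forall l : 'I_t, exists pr : T * T,
    (pr.2 == @enum_val T (mem R) (widen_ord Ht l)) && (rk pr.1 < rk pr.2) && (f pr.1 == f pr.2).
  move=> l; have := @enum_valP T (mem R) (widen_ord Ht l).
  rewrite inE => /existsP [p /andP [lt fe]].
  by exists (p, enum_val (widen_ord Ht l)); rewrite /= eqxx lt fe.
have [g Hg] := fin_all_exists Hi.
exists [ffun l => g l]; split.
  move=> l1 l2; rewrite !ffunE.
  move: (Hg l1) (Hg l2) => /andP [/andP [/eqP -> _] _] /andP [/andP [/eqP -> _] _].
  move/enum_val_inj => E; apply: val_inj.
  by have := congr1 val E.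
move=> l; rewrite ffunE.
by move: (Hg l) => /andP [/andP [_ ->] /eqP ->].
Qed.

Definition Bset (k n m s t : nat) (sg : {ffun 'I_s -> 'I_m})
  (h : {ffun 'I_t -> ('I_s * 'I_k) * ('I_s * 'I_k)}) : {set formula k n m} :=
  [set F : formula k n m | [&& injectiveb sg, injectiveb (fun l => (h l).2),
     [forall l, rk (h l).1 < rk (h l).2] &
     [forall l, (F (sg (h l).1.1) (h l).1.2).1 == (F (sg (h l).2.1) (h l).2.2).1]]].

Lemma Bset_card (k n m s t : nat) (sg : {ffun 'I_s -> 'I_m})
  (h : {ffun 'I_t -> ('I_s * 'I_k) * ('I_s * 'I_k)}) (z : 'I_n) :
  #|Bset n sg h| * n ^ t <= #|{: formula k n m}|.
Proof.
case: (boolP (injectiveb sg && injectiveb (fun l => (h l).2))); last first.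
  move=> nv; rewrite (_ : Bset n sg h = set0) ?cards0 //.
  apply/setP => F; rewrite !inE; apply/negP => /and4P [a b _ _].
  by move: nv; rewrite a b.
move=> /andP [/injectiveP isg /injectiveP ih].
set Tg := [set (sg (h l).2.1, (h l).2.2) | l : 'I_t].
have cT : #|Tg| = t.
  rewrite card_imset ?card_ord // => l1 l2 [E1 E2]; apply: ih.
  by rewrite [(h l1).2]surjective_pairing [(h l2).2]surjective_pairing (isg _ _ E1) E2.
pose Phi := fun F : formula k n m =>
  [ffun x : 'I_m * 'I_k => if x \in Tg then (z, (F x.1 x.2).2) else F x.1 x.2].
have injPhi : {in Bset n sg h &, injective Phi}.
  move=> F F'; rewrite !inE => /and4P [_ _ /forallP rkh /forallP HF]
     /and4P [_ _ _ /forallP HF'] E.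
  have key : forall N (x : 'I_s * 'I_k), rk x < N -> F (sg x.1) x.2 = F' (sg x.1) x.2.
    elim=> [|N IH] x //= lt.
    have Ex : Phi F (sg x.1, x.2) = Phi F' (sg x.1, x.2) by rewrite E.
    move: Ex; rewrite /Phi !ffunE /=.
    case: (boolP ((sg x.1, x.2) \in Tg)) => [|_ //].
    move=> /imsetP [l _ [E1 E2]] [E3].
    have xe : x = (h l).2.
      by rewrite [x]surjective_pairing [(h l).2]surjective_pairing (isg _ _ E1) E2.
    rewrite [F _ _]surjective_pairing [F' _ _]surjective_pairing E3; congr pair.
    rewrite xe; move/eqP: (HF l) <-; move/eqP: (HF' l) <-.
    apply: (congr1 fst); apply: IH; move: (rkh l); rewrite -xe; lia.
  apply/ffunP => c; apply/ffunP => j.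
  case: (boolP ((c, j) \in Tg)) => [/imsetP [l _ [-> ->]] | nin].
    exact: (key (rk (h l).2).+1).
  have : Phi F (c, j) = Phi F' (c, j) by rewrite E.
   rewrite /Phi !ffunE /= (negbTE nin); done.
pose Fam := fun x : 'I_m * 'I_k => [pred y : 'I_n * bool | (x \notin Tg) || (y.1 == z)].
have sub : Phi @: Bset n sg h \subset finfun.family Fam.
  apply/subsetP => g /imsetP [F _ ->]; apply/forallP => x.
  by rewrite /Phi ffunE /= inE; case: (x \in Tg) => /=.
rewrite -(card_in_imset injPhi).
apply: (@leq_trans (#|finfun.family Fam| * n ^ t)); first by rewrite leq_mul2r (subset_leq_card sub) orbT.
rewrite card_family foldrE big_map big_enum /=.
apply: (@leq_trans (\prod_(i : 'I_m * 'I_k) (if i \in Tg then 2 else n * 2) * n ^ t)).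
  rewrite leq_mul2r; apply/orP; right; apply: leq_prod => i _.
  case: (i \in Tg) => /=.
    apply: (@leq_trans #|[set (z, b) | b : bool]|); last by apply: (leq_trans (leq_imset_card _ _)); rewrite card_bool.
    apply: subset_leq_card; apply/subsetP => y /= /eqP Hy; rewrite -Hy.
    by apply/imsetP; exists y.2 => //; rewrite -surjective_pairing.
  by apply: leq_trans (max_card _) _; rewrite card_prod card_ord card_bool.
rewrite -cT -prod_nat_const [X in _ * X]big_mkcond -big_split /=.
Show.
rewrite (eq_bigr (fun _ => n * 2)); last by move=> i _; case: (i \in Tg) => /=; lia.
rewrite prod_nat_const !card_ffun !card_prod !card_ord card_bool -expnM mulnC.
by rewrite [m * k]mulnC.
Qed.


Definition badS (k n m s : nat) : {set formula k n m} :=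
  [set F | [exists sg : {ffun 'I_s -> 'I_m},
     [exists h : {ffun 'I_(2 * s) -> ('I_s * 'I_k) * ('I_s * 'I_k)}, F \in Bset n sg h]]].

Lemma sum_const_T (T : finType) (c : nat) : \sum_(i : T) c = #|T| * c.
Proof. by rewrite -sum_nat_const; apply: eq_bigl => i; rewrite inE. Qed.

Lemma badS_card (k n m s : nat) (z : 'I_n) :
  #|badS k n m s| * n ^ (2 * s) <= m ^ s * ((s * k) * (s * k)) ^ (2 * s) * #|{: formula k n m}|.
Proof.
apply: (@leq_trans ((\sum_(sg : {ffun 'I_s -> 'I_m}) \sum_(h : {ffun 'I_(2 * s) -> ('I_s * 'I_k) * ('I_s * 'I_k)}) #|Bset n sg h|) * n ^ (2 * s))).
  rewrite leq_mul2r; apply/orP; right.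
  apply: leq_trans (card_exists_le (fun F (sg : {ffun 'I_s -> 'I_m}) =>
     [exists h : {ffun 'I_(2 * s) -> ('I_s * 'I_k) * ('I_s * 'I_k)}, F \in Bset n sg h])) _.
  apply: leq_sum => sg _.
  apply: leq_trans (card_exists_le (fun F h => F \in Bset n sg h)) _.
  apply: leq_sum => h _; apply: subset_leq_card; apply/subsetP => F; rewrite inE; done.
rewrite big_distrl /=.
apply: (@leq_trans (\sum_(sg : {ffun 'I_s -> 'I_m}) \sum_(h : {ffun 'I_(2 * s) -> ('I_s * 'I_k) * ('I_s * 'I_k)}) #|{: formula k n m}|)).
  apply: leq_sum => sg _; rewrite big_distrl /=; apply: leq_sum => h _.
  exact: Bset_card.
under eq_bigr do rewrite sum_const_T.
rewrite sum_const_T !card_ffun !card_prod !card_ord.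
by rewrite mulnA.
Qed.

Lemma card_sum (X : finType) (B : {set X}) : #|B| = \sum_(x : X) (x \in B : nat).
Proof. by rewrite -sum1_card big_mkcond; apply: eq_bigr => x _; case: (x \in B). Qed.

Lemma dc (I X : finType) (S : {set I}) (A : I -> {set X}) :
  2 * #|\bigcup_(c in S) A c| <=
  \sum_(c in S) (#|A c| + #|A c :\: \bigcup_(c' in S :\ c) A c'|).
Proof.
rewrite card_sum big_distrr /=.
under [X in _ <= X]eq_bigr do rewrite !card_sum -big_split /=.
rewrite exchange_big; apply: leq_sum => x _.
case: (boolP (x \in \bigcup_(c in S) A c)) => [/bigcupP [c cS xc] | _]; last by rewrite muln0.
rewrite (bigD1 c) //= xc.
case: (boolP (x \in A c :\: \bigcup_(c' in S :\ c) A c')) => [xU | xnU].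
  exact: leq_addr.
move: xnU; rewrite inE xc andbT negbK => /bigcupP [c' c'S xc'].
move: (c'S); rewrite !inE => /andP [c'c c'S'].
rewrite (bigD1 c') /=; last by rewrite c'S' c'c.
rewrite xc' /=; lia.
Qed.

Lemma not_good (k u : nat) (beta : R) : (0 < beta)%R -> (beta < 1)%R ->
  (8 / (1 - beta) < INR k)%R -> ~~ Rleb (beta * INR k)%R (INR u) -> u + 9 <= k.
Proof.
move=> b0 b1 hk; rewrite /Rleb; case: Rle_dec => // H _.
have H1 : (8 < INR k * (1 - beta))%R.
  have e : (8 = 8 / (1 - beta) * (1 - beta))%R by field; lra.
  rewrite [X in (X < _)%R]e; apply: Rmult_lt_compat_r; lra.
have H2 : (INR (u + 8) < INR k)%R by rewrite plus_INR; simpl INR; nra.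
apply INR_lt in H2; move/ltP: H2; lia.
Qed.

Lemma bad_witness (k n m : nat) (beta : R) (F : formula k n m) :
  (0 < beta)%R -> (beta < 1)%R -> (8 / (1 - beta) < INR k)%R ->
  ~~ unique_vars_property beta F ->
  exists S : {set 'I_m},
    [/\ 2 <= #|S|, Rleb (INR #|S|) (2 * log2 (INR n))%R & F \in badS k n m #|S|].
Proof.
move=> b0 b1 hk /forallPn [S]; rewrite negb_imply => /andP [/andP [s2 sL] /existsPn noc].
exists S; split => //.
set U := fun c => vbl (F c) :\: \bigcup_(c' in S :\ c) vbl (F c').
have vk : forall c, #|vbl (F c)| <= k.
  by move=> c; rewrite /vbl; apply: leq_trans (leq_imset_card _ _) _; rewrite card_ord.
have Uk : forall c, #|U c| <= k.
  by move=> c; apply: leq_trans (vk c); apply: subset_leq_card; apply: subsetDl.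
have pr : forall c1 c2, c1 \in S -> c2 \in S -> c1 != c2 ->
    (#|U c1| + 9 <= k) || (#|U c2| + 9 <= k).
  move=> c1 c2 h1 h2 ne.
  move: (noc c1) => /existsPn /(_ c2); rewrite ne h1 h2 /= negb_and => /orP [g1|g2].
    by apply/orP; left; exact: (not_good b0 b1 hk g1).
  by apply/orP; right; exact: (not_good b0 b1 hk g2).
have [c0 c0S c0P] : exists2 c0, c0 \in S & forall c, c \in S -> c != c0 -> #|U c| + 9 <= k.
  case: (boolP [exists c, (c \in S) && ~~ (#|U c| + 9 <= k)]).
    move=> /existsP [c0 /andP [c0S nc0]]; exists c0 => // c cS ne.
    by have := pr c c0 cS c0S ne; rewrite (negbTE nc0) orbF.
  move=> /existsPn H; have : 0 < #|S| by lia.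
  case/card_gt0P => c0 c0S; exists c0 => // c cS _.
  by move: (H c); rewrite cS /= negbK.
have sumU : \sum_(c in S) (#|U c| + 9) <= #|S| * k + 9.
  apply: (@leq_trans (\sum_(c in S) (k + 9 * (c == c0)))).
    apply: leq_sum => c cS; case: (eqVneq c c0) => [->|ne].
      by have := Uk c0; lia.
    by have := c0P c cS ne; lia.
  rewrite big_split /= sum_nat_const -big_distrr /= (bigD1 c0) //= eqxx big1.
    by rewrite leq_add2l.
  by move=> c /andP [_ ne]; rewrite (negbTE ne).
have sumv : \sum_(c in S) #|vbl (F c)| <= #|S| * k.
  apply: (@leq_trans (\sum_(c in S) k)); first by apply: leq_sum => c _; exact: vk.
  by rewrite sum_nat_const.
have D := dc S (fun c => vbl (F c)).
rewrite big_split /= in D; rewrite big_split sum_nat_const /= in sumU.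
set V := \bigcup_(c in S) vbl (F c) in D.
have hV : #|V| + 2 * #|S| <= #|S| * k.
  move: D sumU sumv; rewrite /U /=; set P := #|S| * k.
  set Q := \sum_(i in S) #|vbl (F i) :\: _|.
  set W := \sum_(i in S) #|vbl (F i)|.
  move: s2; rewrite /P; set sS := #|S|.
  clearbody Q W V sS. lia.
pose sg : {ffun 'I_#|S| -> 'I_m} := [ffun a => @enum_val _ (mem S) a].
pose f := fun x : 'I_#|S| * 'I_k => (F (sg x.1) x.2).1.
have img : #|f @: [set: 'I_#|S| * 'I_k]| <= #|V|.
  apply: subset_leq_card; apply/subsetP => y /imsetP [x _ ->].
  apply/bigcupP; exists (sg x.1); first by rewrite ffunE; exact: enum_valP.
  by rewrite /vbl; apply/imsetP; exists x.2.
have := first_occ f; rewrite card_prod !card_ord => fo.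
have Ht : 2 * #|S| <= #|[set i | [exists p, (rk p < rk i) && (f p == f i)]]|.
  move: fo img hV; set sS := #|S|; set r := #|[set _ | _]|; set a := #|_ @: _|.
  set v := #|V|; clearbody sS r a v; lia.
have [h [ih hh]] := @extract _ _ f (2 * #|S|) Ht.
rewrite inE; apply/existsP; exists sg; apply/existsP; exists h; rewrite inE; apply/and4P; split.
- by apply/injectiveP => a b; rewrite !ffunE; exact: enum_val_inj.
- by apply/injectiveP.
- by apply/forallP => l; case: (hh l).
- by apply/forallP => l; case: (hh l) => _ e; apply/eqP; exact: e.
Qed.

Lemma expn_pow (a b : nat) : expn a b = Nat.pow a b.
Proof. elim: b => [|b IH] //; by rewrite expnS IH. Qed.

Lemma INR_expn (a b : nat) : INR (expn a b) = (INR a ^ b)%R.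
Proof. by rewrite expn_pow pow_INR. Qed.

Lemma exp_pow_nat (x : R) (k : nat) : (exp x ^ k = exp (INR k * x))%R.
Proof.
elim: k => [|k IH]; first by rewrite /= Rmult_0_l exp_0.
rewrite S_INR [(exp x ^ k.+1)%R]/= IH -exp_plus; congr exp; ring.
Qed.

Lemma pow_le_1' (q : R) (k : nat) : (0 <= q)%R -> (q <= 1)%R -> (q ^ k <= 1)%R.
Proof.
move=> q0 q1; elim: k => [|k IH] /=; first lra.
have : (0 <= q ^ k)%R by apply: pow_le.
nra.
Qed.

Lemma pow_dec2 (q : R) (s : nat) : (0 <= q)%R -> (q <= 1)%R -> (2 <= s)%N -> (q ^ s <= q ^ 2)%R.
Proof.
move=> q0 q1 s2.
have -> : s = (2 + (s - 2))%coq_nat by lia.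
rewrite pow_add.
have h1 := pow_le_1' (s - 2) q0 q1.
have h2 : (0 <= q ^ 2)%R by apply: pow_le.
nra.
Qed.

Lemma per_s_bound (k n m s X Fm : nat) (alpha y : R) :
  (0 < alpha)%R -> (INR m <= alpha * INR n)%R -> (y ^ 10 = INR n)%R -> (1 <= y)%R ->
  (2 <= s)%N -> (INR s <= 40 * y)%R -> (alpha * (40 * INR k) ^ 4 <= y ^ 6)%R ->
  X * n ^ (2 * s) <= m ^ s * (s * k * (s * k)) ^ (2 * s) * Fm ->
  (INR X <= INR Fm * (alpha * (40 * INR k) ^ 4 / y ^ 6) ^ 2)%R.
Proof.
move=> a0 hm hy y1 s2 hs hQ /leP /le_INR H.
rewrite !mult_INR !INR_expn !mult_INR in H.
set Q := (alpha * (40 * INR k) ^ 4 / y ^ 6)%R.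
have y0 : (0 < y)%R by lra.
have y6 : (0 < y ^ 6)%R by apply: pow_lt.
have Q0 : (0 <= Q)%R.
  rewrite /Q; apply: Rmult_le_pos; last by apply: Rlt_le; apply: Rinv_0_lt_compat.
  apply: Rmult_le_pos; [lra | apply: pow_le; have := pos_INR k; lra].
have Q1 : (Q <= 1)%R.
  rewrite /Q; apply: (Rmult_le_reg_r (y ^ 6)) => //.
  rewrite Rmult_1_l /Rdiv Rmult_assoc Rinv_l; lra.
set c := (40 * y * INR k)%R.
have k0 := pos_INR k; have s0 := pos_INR s; have m0 := pos_INR m.
have b1 : (INR m ^ s <= (alpha * INR n) ^ s)%R by apply: pow_incr; lra.
have b2 : ((INR s * INR k * (INR s * INR k)) ^ (2 * s) <= (c * c) ^ (2 * s))%R.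
  apply: pow_incr; split; first nra.
  have : (INR s * INR k <= c)%R by rewrite /c; nra.
  have : (0 <= INR s * INR k)%R by nra.
  nra.
have key : ((alpha * INR n) ^ s * (c * c) ^ (2 * s) = Q ^ s * INR n ^ (2 * s))%R.
  have e1 : ((c * c) ^ (2 * s) = ((c * c) ^ 2) ^ s)%R by rewrite -pow_mult.
  have e2 : (INR n ^ (2 * s) = (INR n ^ 2) ^ s)%R by rewrite -pow_mult.
  rewrite e1 e2 -!Rpow_mult_distr; congr pow.
  rewrite /Q /c -hy; field; lra.
have nA : (0 < INR n ^ (2 * s))%R.
  apply: pow_lt; rewrite -hy; apply: pow_lt; lra.
have F0 := pos_INR Fm.
have h3 : (INR X * INR n ^ (2 * s) <= Q ^ s * INR n ^ (2 * s) * INR Fm)%R.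
  apply: (Rle_trans _ _ _ H); rewrite -key.
  apply: Rmult_le_compat_r => //; apply: Rmult_le_compat => //.
  - by apply: pow_le.
  - by apply: pow_le; nra.
have h4 : (INR X <= Q ^ s * INR Fm)%R.
  apply: (Rmult_le_reg_r (INR n ^ (2 * s))) => //; nra.
have := pow_dec2 Q0 Q1 s2; nra.
Qed.

Lemma num_clauses_le (alpha : R) (n : nat) : (0 < alpha)%R ->
  (INR (num_clauses alpha n) <= alpha * INR n)%R.
Proof.
move=> a0; rewrite /num_clauses.
have [h1 _] := base_Int_part (alpha * INR n).
case: (Z_le_gt_dec 0 (Int_part (alpha * INR n))) => hz.
  by rewrite INR_IZR_INZ Z2Nat.id.
have -> : Z.to_nat (Int_part (alpha * INR n)) = 0 by lia.
have := pos_INR n; simpl INR; nra.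
Qed.

Lemma sum_bound (N : nat) (g : nat -> nat) (X : R) :
  (forall s, (INR (g s) <= X)%R) -> (INR (\sum_(s < N) g s) <= INR N * X)%R.
Proof.
move=> H; elim: N => [|N IH]; first by rewrite big_ord0 /=; lra.
rewrite big_ord_recr plus_INR S_INR; have e : \sum_(i < N) g (widen_ord (leqnSn N) i) = \sum_(i < N) g i by [].
rewrite e; have := H N; simpl nat_of_ord; lra.
Qed.

Unset Implicit Arguments.

Theorem lemma4p14 (k : nat) (alpha beta : R) :
  (0 < alpha)%R -> (0 < beta)%R -> (beta < 1)%R ->
  (8 / (1 - beta) < INR k)%R ->
  forall eps : R, (0 < eps)%R ->
  exists N : nat, forall n : nat, (N <= n)%N ->
    (1 - eps <= prob (@unique_vars_property k n (num_clauses alpha n) beta))%R.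
Proof.
move=> a0 b0 b1 hk eps e0.
set c1 := (alpha * (40 * INR k) ^ 4)%R.
have k0 := pos_INR k.
have c10 : (0 <= c1)%R.
  rewrite /c1; apply: Rmult_le_pos; [lra | apply: pow_le; lra].
set Y0 := (1 + c1 + 2 * c1 ^ 2 / eps + 40)%R.
have c2e : (0 <= 2 * c1 ^ 2 / eps)%R.
  apply: Rmult_le_pos; [have := pow2_ge_0 c1; lra | apply: Rlt_le; apply: Rinv_0_lt_compat; lra].
have Y01 : (1 <= Y0)%R by rewrite /Y0; lra.
have [N HN] := INR_unbounded (Y0 ^ 10).
exists N => n Nn.
have nN : (INR N <= INR n)%R by apply: le_INR; apply/leP.
have Y10 : (1 <= Y0 ^ 10)%R by rewrite -(pow1 10); apply: pow_incr; lra.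
have npos : (0 < INR n)%R by lra.
have n1 : (0 < n)%N by apply/ltP; apply: INR_lt; simpl INR; lra.
have n1R : (1 <= INR n)%R by apply: (le_INR 1); apply/leP.
set y := exp (ln (INR n) / 10).
have hy : (y ^ 10 = INR n)%R.
  rewrite /y exp_pow_nat.
  have -> : (INR 10 * (ln (INR n) / 10) = ln (INR n))%R by simpl INR; field.
  exact: exp_ln.
have y0 : (0 < y)%R by apply: exp_pos.
have yY : (Y0 < y)%R.
  apply: Rnot_le_lt => hle.
  have : (y ^ 10 <= Y0 ^ 10)%R by apply: pow_incr; lra.
  lra.
have y1 : (1 <= y)%R by lra.
have ln0 : (0 <= ln (INR n))%R.
  apply: Rnot_lt_le => hl.
  have := exp_increasing _ _ hl; rewrite exp_ln // exp_0 => h.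
  lra.
have lnn : (ln (INR n) < 10 * y)%R.
  have : (ln (INR n) / 10 < y)%R.
    rewrite /y; set x := (ln (INR n) / 10)%R.
    case: (Req_dec x 0) => hx; first by rewrite hx exp_0; lra.
    have := exp_ineq1 x hx; lra.
  lra.
have L40 : (2 * log2 (INR n) <= 40 * y)%R.
  rewrite /log2; have l2 := ln_lt_2.
  have : (2 * (ln (INR n) / ln 2) <= 4 * ln (INR n))%R.
    apply: (Rmult_le_reg_r (ln 2)); first lra.
    have -> : (2 * (ln (INR n) / ln 2) * ln 2 = 2 * ln (INR n))%R by field; lra.
    nra.
  lra.
have y6 : (y <= y ^ 6)%R by rewrite -{1}(pow_1 y); apply: Rle_pow => //; apply/leP.
have hQ : (c1 <= y ^ 6)%R by rewrite /Y0 in yY; lra.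
have y2 : (y <= y ^ 2)%R by rewrite -{1}(pow_1 y); apply: Rle_pow => //; apply/leP.
have y210 : (y ^ 2 <= y ^ 10)%R by apply: Rle_pow => //; apply/leP.
have y40n : (40 * y <= INR n)%R.
  have : (40 * y <= y * y)%R by rewrite /Y0 in yY; nra.
  rewrite -hy; simpl pow in y2, y210 |- *; lra.
set m := num_clauses alpha n.
have hm : (INR m <= alpha * INR n)%R by apply: num_clauses_le.
pose z : 'I_n := Ordinal n1.
set Q := (c1 / y ^ 6)%R.
have Q0 : (0 <= Q)%R by rewrite /Q; apply: Rmult_le_pos => //; apply: Rlt_le; apply: Rinv_0_lt_compat; apply: pow_lt.
set Fm := #|{: formula k n m}|.
have Fm0 := pos_INR Fm.
rewrite /prob.
set G := [set x | unique_vars_property beta x].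
have cG := cardsC G.
have bound : (INR #|~: G| <= INR n.+1 * (INR Fm * Q ^ 2))%R.
  apply: (Rle_trans _ (INR (\sum_(s < n.+1) #|[set F : formula k n m |
     ((2 <= s)%N && Rleb (INR s) (2 * log2 (INR n))%R) && (F \in badS k n m s)]|))).
    apply: le_INR; apply/leP.
    apply: leq_trans (card_exists_le (fun (F : formula k n m) (s : 'I_n.+1) =>
       ((2 <= s)%N && Rleb (INR s) (2 * log2 (INR n))%R) && (F \in badS k n m s))).
    apply: subset_leq_card; apply/subsetP => F; rewrite !inE => nP.
    have [S [s2 sL bS]] := bad_witness b0 b1 hk nP.
    have ltS : #|S| < n.+1.
      move: (sL); rewrite /Rleb; case: Rle_dec => // hS _.
      have : (INR #|S| <= INR n)%R by lra.
      by move/INR_le/leP.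
    by apply/existsP; exists (Ordinal ltS); rewrite /= s2 sL bS.
  apply: (@sum_bound n.+1 (fun s => #|[set F : formula k n m |
     ((2 <= s)%N && Rleb (INR s) (2 * log2 (INR n))%R) && (F \in badS k n m s)]|) (INR Fm * Q ^ 2)%R).
  move=> s.
  case: (boolP ((2 <= s)%N && Rleb (INR s) (2 * log2 (INR n))%R)) => [hc | nc].
    have /andP [s2 sL] := hc.
    rewrite (_ : [set F | _] = badS k n m s); last by apply/setP => F; rewrite inE.
    have hs : (INR s <= 40 * y)%R by move: sL; rewrite /Rleb; case: Rle_dec => // h _; lra.
    exact: (per_s_bound a0 hm hy y1 s2 hs hQ (@badS_card k n m s z)).
  rewrite (_ : [set F | _] = set0) ?cards0; last by apply/setP => F; rewrite inE.
  simpl INR; have := pow2_ge_0 Q; nra.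
have fin : (INR n.+1 * Q ^ 2 <= eps)%R.
  have e1 : (Q ^ 2 * y ^ 12 = c1 ^ 2)%R by rewrite /Q; field; lra.
  have e2 : (INR n.+1 <= 2 * y ^ 10)%R by rewrite S_INR hy; lra.
  have e3 : (2 * c1 ^ 2 < eps * y ^ 2)%R.
    have : (2 * c1 ^ 2 / eps < y)%R by rewrite /Y0 in yY; lra.
    move=> h; have : (2 * c1 ^ 2 < eps * y)%R.
      have -> : (2 * c1 ^ 2 = (2 * c1 ^ 2 / eps) * eps)%R by field; lra.
      nra.
    nra.
  have yp2 : (0 < y ^ 2)%R by apply: pow_lt.
  apply: (Rmult_le_reg_r (y ^ 2)) => //.
  have q2 := pow2_ge_0 Q.
  have : (INR n.+1 * Q ^ 2 * y ^ 2 <= 2 * y ^ 10 * Q ^ 2 * y ^ 2)%R.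
    apply: Rmult_le_compat_r; first lra.
    apply: Rmult_le_compat_r; lra.
  have e1' : (Q ^ 2 * (y ^ 10 * y ^ 2) = c1 ^ 2)%R by rewrite -pow_add; exact: e1.
  nra.
have FmT : #|formula k n m| = Fm by [].
have Fmpos : (0 < INR Fm)%R.
  apply: lt_0_INR; apply/ltP; apply/card_gt0P.
  by exists [ffun _ => [ffun _ => (z, true)]].
have hG : (INR #|G| + INR #|~: G| = INR Fm)%R.
  by rewrite -plus_INR; congr INR; exact: cG.
change (1 - eps <= INR #|G| / INR Fm)%R.
have hb : (INR #|~: G| <= eps * INR Fm)%R.
  apply: (Rle_trans _ _ _ bound).
  have := pow2_ge_0 Q; nra.
apply: (Rmult_le_reg_r (INR Fm)) => //.
rewrite /Rdiv Rmult_assoc Rinv_l; last lra.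
nra.
Qed.
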